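(* Let $K$ be a field of characteristic $0$. Let $m=x_1^{\alpha_1}\cdots x_n^{\alpha_n}$ with $\alpha_i\ge1$ for all $i$, let $d=\alpha_1+\cdots+\alpha_n$, and let $f$ be in the orbit of $m$, i.e., $f(x)=m(A.x)$ for some $A\in GL_n(K)$. Then the centralizer $C(\mathfrak{g}_f)$ is of dimension $n$. Moreover, there is a unique $H\in C(\mathfrak{g}_f)$ such that $\mathrm{Tr}\,H=d$ and $\mathrm{Tr}(HM)=0$ for all $M\in\mathfrak{g}_f$. The matrix $H$ is diagonalizable, its eigenvalues are $(\alpha_1,\ldots,\alpha_n)$, and $C(\mathfrak{g}_f)=\mathfrak{g}_f\oplus\mathrm{Span}(H)$.
   Context: For $P\in K[x_1,\ldots,x_n]$, the Lie algebra $\mathfrak{g}_P$ of $P$ is the Lie algebra of the group of invariants $\{A\in GL_n(K): P(A.x)=P(x)\}$; equivalently, $\mathfrak{g}_P$ is the linear subspace of matrices $A=(a_{ij})\in M_n(K)$ such that $\sum_{i,j\in[n]} a_{ij}\,x_j\,\frac{\partial P}{\partial x_i}=0$. For a set $S\subseteq M_n(K)$, the centralizer $C(S)$ is the linear subspace of matrices commuting with every element of $S$. *)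

(* Defs.v *)
From mathcomp Require Import all_boot all_order all_algebra.
From mathcomp Require Export mpoly.
Set Implicit Arguments. Unset Strict Implicit. Unset Printing Implicit Defensive.
Import GRing.Theory.
Local Open Scope ring_scope.

Section LieAlg.
Variables (K : fieldType) (n : nat).

Definition lie_op (P : {mpoly K[n]}) (M : 'M[K]_n) : {mpoly K[n]} :=
  \sum_(i < n) \sum_(j < n) M i j *: ('X_j * P^`M(i)).

(* A finite list of monomials containing the support of every lie_op P M. *)
Definition lie_mons (P : {mpoly K[n]}) : seq 'X_{1..n} :=
  flatten [seq msupp ('X_ij.2 * P^`M(ij.1)) | ij <- enum {: 'I_n * 'I_n}].

Definition lie_coefs (P : {mpoly K[n]}) (v : 'rV[K]_(n * n))
  : 'rV[K]_(size (lie_mons P)) :=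
  \row_(k < size (lie_mons P)) (lie_op P (vec_mx v))@_(nth 0%MM (lie_mons P) k).

(* The Lie algebra g_P, as a subspace of M_n(K) encoded (mxalgebra style,
   rows = mxvec of matrices) : the kernel of the linear map lie_op P. *)
Definition lie_alg (P : {mpoly K[n]}) : 'M[K]_(n * n) :=
  kermx (lin1_mx (lie_coefs P)).

End LieAlg.

(* Main.v *)
Require Import Defs.
From HB Require Import structures.
From mathcomp Require Import all_boot all_order all_algebra.
From mathcomp Require Import mpoly.
From mathcomp Require Import ring zify.
Set Implicit Arguments. Unset Strict Implicit. Unset Printing Implicit Defensive.
Import GRing.Theory.
Local Open Scope ring_scope.

Section Aux.
Variables (K : fieldType) (n : nat).

Lemma lie_op_lin (P : {mpoly K[n]}) : linear (lie_op P).
Proof.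
move=> a M N; rewrite /lie_op scaler_sumr -big_split; apply: eq_bigr => i _.
rewrite scaler_sumr -big_split; apply: eq_bigr => j _.
by rewrite !mxE scalerDl scalerA.
Qed.

Lemma lie_coefs_lin (P : {mpoly K[n]}) : linear (@lie_coefs K n P).
Proof.
move=> a u v; apply/rowP => k; rewrite !mxE linearP lie_op_lin.
by rewrite mcoeffD mcoeffZ.
Qed.

HB.instance Definition _ P := GRing.isLinear.Build K 'rV[K]_(n * n) _ _
  (@lie_coefs K n P) (lie_coefs_lin P).

Lemma lie_algP (P : {mpoly K[n]}) (M : 'M[K]_n) :
  (M \in lie_alg P)%MS = (lie_op P M == 0).
Proof.
rewrite /lie_alg; apply/sub_kermxP/eqP => [H|H]; last first.
  by rewrite mul_rV_lin1; apply/rowP => k; rewrite !mxE mxvecK H mcoeff0.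
move: H; rewrite mul_rV_lin1 => H.
apply/mpolyP => x; rewrite mcoeff0.
have [xin|xnin] := boolP (x \in lie_mons P).
  have hk : (index x (lie_mons P) < size (lie_mons P))%N by rewrite index_mem.
  move/rowP: H => /(_ (Ordinal hk)); rewrite !mxE /= mxvecK nth_index //.
rewrite /lie_op raddf_sum big1 // => i _; rewrite raddf_sum big1 // => j _.
rewrite /= mcoeffZ memN_msupp_eq0 ?mulr0 //; apply: contra xnin => xin.
apply/flatten_mapP; exists (i, j) => //; by rewrite mem_enum.
Qed.

Lemma lie_opL (M : 'M[K]_n) a (p q : {mpoly K[n]}) :
  lie_op (a *: p + q) M = a *: lie_op p M + lie_op q M.
Proof.
rewrite /lie_op scaler_sumr -big_split; apply: eq_bigr => i _.
rewrite scaler_sumr -big_split; apply: eq_bigr => j _.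
by rewrite mderivD mderivZ mulrDr scalerDr -scalerAr !scalerA mulrC.
Qed.

Lemma lie_opM (M : 'M[K]_n) (p q : {mpoly K[n]}) :
  lie_op (p * q) M = lie_op p M * q + p * lie_op q M.
Proof.
rewrite /lie_op mulr_suml mulr_sumr -big_split; apply: eq_bigr => i _.
rewrite mulr_suml mulr_sumr -big_split; apply: eq_bigr => j _.
rewrite /= mderivM -!mul_mpolyC; ring.
Qed.

Lemma lie_op0 (M : 'M[K]_n) : lie_op 0 M = 0.
Proof.
by rewrite /lie_op big1 // => i _; rewrite big1 // => j _; rewrite mderiv0 mulr0 scaler0.
Qed.

Lemma lie_op1 (M : 'M[K]_n) : lie_op 1 M = 0.
Proof.
rewrite /lie_op big1 // => i _; rewrite big1 // => j _.
by rewrite -mpolyC1 mderivC mulr0 scaler0.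
Qed.

Lemma submnmm (m : 'X_{1..n}) : (m - m)%MM = 0%MM.
Proof. by apply/mnmP => k; rewrite mnmBE subnn mnm0E. Qed.

Lemma lie_opX (M : 'M[K]_n) i : lie_op 'X_i M = \sum_(j < n) M i j *: 'X_j.
Proof.
rewrite /lie_op (bigD1 i) //= [X in _ + X]big1 ?addr0 => [|k ki].
  apply: eq_bigr => j _; rewrite mderivX mnm1E eqxx submnmm mpolyX0.
  by rewrite scale1r mulr1.
rewrite big1 // => j _; rewrite mderivX mnm1E eq_sym (negbTE ki) scale0r.
by rewrite mulr0 scaler0.
Qed.

Lemma lie_op_comp (p : {mpoly K[n]}) (t : n.-tuple {mpoly K[n]}) M :
  lie_op (p \mPo t) M = \sum_(i < n) (p^`M(i) \mPo t) * lie_op (tnth t i) M.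
Proof.
pose Q q := lie_op (q \mPo t) M = \sum_(i < n) (q^`M(i) \mPo t) * lie_op (tnth t i) M.
have QM q1 q2 : Q q1 -> Q q2 -> Q (q1 * q2).
  rewrite /Q rmorphM lie_opM => -> ->.
  rewrite mulr_suml mulr_sumr -big_split; apply: eq_bigr => i _ /=.
  rewrite mderivM rmorphD !rmorphM /=; ring.
have Q1 : Q 1.
  rewrite /Q rmorph1 lie_op1 big1 // => i _.
  by rewrite -mpolyC1 mderivC rmorph0 mul0r.
have QX i : Q 'X_i.
  rewrite /Q comp_mpolyXU -tnth_nth (bigD1 i) //= big1 ?addr0 => [|k ki].
    by rewrite mderivX mnm1E eqxx submnmm mpolyX0 scale1r rmorph1 mul1r.
  by rewrite mderivX mnm1E eq_sym (negbTE ki) scale0r rmorph0 mul0r.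
have QXm m : Q 'X_[m].
  rewrite mpolyXE_id; apply: (big_ind Q) => // i _.
  elim: (m i) => [|k IH]; first by rewrite expr0.
  by rewrite exprS; apply: QM.
elim/mpolyind: p => [|c m p _ _ IH].
  rewrite raddf0 lie_op0 big1 // => i _; by rewrite mderiv0 raddf0 mul0r.
rewrite /= raddfD /= comp_mpolyZ lie_opL QXm IH scaler_sumr -big_split.
apply: eq_bigr => i _; rewrite mderivD mderivZ raddfD /= comp_mpolyZ.
by rewrite mulrDl scalerAl.
Qed.


Definition ltup (A : 'M[K]_n) : n.-tuple {mpoly K[n]} :=
  [tuple \sum_(j < n) A i j *: 'X_j | i < n].

Lemma lie_op_sumZ (M : 'M[K]_n) (c : 'I_n -> K) (q : 'I_n -> {mpoly K[n]}) :
  lie_op (\sum_(j < n) c j *: q j) M = \sum_(j < n) c j *: lie_op (q j) M.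
Proof.
elim/big_rec2: _ => [|j x y _ <-]; first exact: lie_op0.
by rewrite lie_opL.
Qed.

Lemma sum_ltup (B A : 'M[K]_n) i :
  \sum_(j < n) B i j *: (\sum_(l < n) A j l *: 'X_l)
  = \sum_(l < n) (B *m A) i l *: 'X_l :> {mpoly K[n]}.
Proof.
under eq_bigr do rewrite scaler_sumr.
rewrite exchange_big /=; apply: eq_bigr => l _.
by rewrite mxE scaler_suml; apply: eq_bigr => j _; rewrite scalerA.
Qed.

Lemma lie_op_ltup A M i :
  lie_op (tnth (ltup A) i) M = \sum_(l < n) (A *m M) i l *: 'X_l.
Proof.
rewrite tnth_mktuple lie_op_sumZ -sum_ltup.
by apply: eq_bigr => j _; rewrite lie_opX.
Qed.

Lemma lie_op_conj (p : {mpoly K[n]}) A N M : N *m A = A *m M ->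
  lie_op (p \mPo ltup A) M = lie_op p N \mPo ltup A.
Proof.
move=> NA; rewrite lie_op_comp; under eq_bigr do rewrite lie_op_ltup.
rewrite /lie_op [in RHS]raddf_sum /=; apply: eq_bigr => i _.
rewrite [in RHS]raddf_sum /= -NA -sum_ltup mulr_sumr.
apply: eq_bigr => j _.
rewrite comp_mpolyZ rmorphM /= comp_mpolyXU -tnth_nth tnth_mktuple.
by rewrite -scalerAr mulrC.
Qed.

Lemma comp_ltupK (A B : 'M[K]_n) (p : {mpoly K[n]}) : A *m B = 1%:M ->
  (p \mPo ltup A) \mPo ltup B = p.
Proof.
move=> AB.
pose Q (q : {mpoly K[n]}) := (q \mPo ltup A) \mPo ltup B = q.
have QM q1 q2 : Q q1 -> Q q2 -> Q (q1 * q2).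
  by rewrite /Q !rmorphM /= => -> ->.
have Q1 : Q 1 by rewrite /Q !rmorph1.
have QX i : Q 'X_i.
  rewrite /Q comp_mpolyXU -tnth_nth tnth_mktuple raddf_sum /=.
  rewrite (eq_bigr (fun j => A i j *: tnth (ltup B) j)); last first.
    by move=> j _; rewrite comp_mpolyZ comp_mpolyXU -tnth_nth.
  under eq_bigr do rewrite tnth_mktuple.
  rewrite sum_ltup AB (bigD1 i) //= big1 ?addr0 => [|l li].
    by rewrite mxE eqxx scale1r.
  by rewrite mxE eq_sym (negbTE li) scale0r.
have QXm m : Q 'X_[m].
  rewrite mpolyXE_id; apply: (big_ind Q) => // i _.
  elim: (m i) => [|k IH]; first by rewrite expr0.
  by rewrite exprS; apply: QM.
elim/mpolyind: p => [|c m p _ _ IH]; first by rewrite /Q !raddf0.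
by rewrite /= !raddfD /= !comp_mpolyZ QXm IH.
Qed.

Lemma lie_alg_conj (p : {mpoly K[n]}) (A M : 'M[K]_n) : A \in unitmx ->
  (M \in lie_alg (p \mPo ltup A))%MS = (lie_op p (A *m M *m invmx A) == 0).
Proof.
move=> uA; rewrite lie_algP (@lie_op_conj p A (A *m M *m invmx A) M);
  last by rewrite mulmxKV.
apply/eqP/eqP => [H|->]; last exact: raddf0.
by rewrite -(@comp_ltupK A (invmx A) (lie_op p _)) ?mulmxV // H raddf0.
Qed.


Section Mono.
Variable alpha : 'I_n -> nat.
Hypothesis apos : forall i, (0 < alpha i)%N.
Let mono : 'X_{1..n} := [multinom alpha i | i < n].

Lemma mono_diag i j : ((U_(j) + (mono - U_(i)))%MM == mono) = (i == j).
Proof.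
apply/eqP/eqP => [/mnmP /(_ i)|->].
  rewrite mnmDE mnmBE !mnm1E !mnmE eqxx; have := apos i.
  by case: eqP => // _; lia.
apply/mnmP => x; rewrite mnmDE mnmBE !mnm1E !mnmE; have := apos x.
by case: eqP => _; lia.
Qed.

Lemma mono_off i j k l : k != l ->
  ((U_(j) + (mono - U_(i)))%MM == (U_(l) + (mono - U_(k)))%MM) = (i == k) && (j == l).
Proof.
move=> kl; apply/eqP/andP => [E|[/eqP-> /eqP->] //].
have Ek := (iffLR (mnmP _ _) E k); have El := (iffLR (mnmP _ _) E l).
have lk : (l == k) = false by rewrite eq_sym (negbTE kl).
move: Ek El; rewrite !mnmDE !mnmBE !mnm1E !mnmE !eqxx (negbTE kl) lk.
have := apos k; have := apos l.
case: (i =P k) => [->|ik]; case: (j =P l) => [->|jl] //; rewrite ?eqxx ?(negbTE kl);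
  try (case: (j =P k) => _); try (case: (i =P l) => _); lia.
Qed.

Lemma lie_op_mono (N : 'M[K]_n) x :
  (lie_op 'X_[mono] N)@_x =
  \sum_(i < n) \sum_(j < n) N i j * (alpha i)%:R * ((U_(j) + (mono - U_(i)))%MM == x)%:R.
Proof.
rewrite /lie_op raddf_sum; apply: eq_bigr => i _ /=.
rewrite raddf_sum; apply: eq_bigr => j _ /=.
rewrite mderivX mnmE -scalerAr mcoeffZ mcoeffZ -mpolyXD mcoeffX.
by rewrite mulrA.
Qed.

Lemma lie_mono0 (c0 : [pchar K] =i pred0) (N : 'M[K]_n) :
  lie_op 'X_[mono] N = 0 <->
  (forall i j, i != j -> N i j = 0) /\ \sum_(i < n) N i i * (alpha i)%:R = 0.
Proof.
have ch := iffLR (pcharf0P K) c0.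
have diagE i : (U_(i) + (mono - U_(i)))%MM = mono by apply/eqP; rewrite mono_diag.
split=> [H|[off sum0]].
  have C x : (lie_op 'X_[mono] N)@_x = 0 by rewrite H mcoeff0.
  split.
    move=> k l kl; have := C (U_(l) + (mono - U_(k)))%MM; rewrite lie_op_mono.
    rewrite (bigD1 k) //= [X in _ + X]big1 => [|i ik]; last first.
      by rewrite big1 // => j _; rewrite mono_off // (negbTE ik) mulr0.
    rewrite (bigD1 l) //= big1 => [|j jl]; last first.
      by rewrite mono_off // eqxx (negbTE jl) mulr0.
    rewrite mono_off // !eqxx mulr1 !addr0 => /eqP; rewrite mulf_eq0.
    by rewrite ch (gtn_eqF (apos k)) orbF => /eqP.
  apply: etrans (C mono); rewrite lie_op_mono; apply: eq_bigr => i _.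
  rewrite (bigD1 i) //= big1 ?addr0 => [|j ij]; first by rewrite diagE eqxx mulr1.
  by rewrite mono_diag eq_sym (negbTE ij) mulr0.
apply/mpolyP => x; rewrite lie_op_mono mcoeff0.
rewrite (eq_bigr (fun i => N i i * (alpha i)%:R * (mono == x)%:R)).
  by rewrite -mulr_suml sum0 mul0r.
move=> i _; rewrite (bigD1 i) //= big1 ?addr0 => [|j ij]; first by rewrite diagE.
by rewrite off ?mul0r // eq_sym.
Qed.

End Mono.


Definition isdiag (X : 'M[K]_n) := forall i j, i != j -> X i j = 0.

Lemma diagE X : isdiag X -> X = diag_mx (\row_k X k k).
Proof.
move=> dX; apply/matrixP => i j; rewrite !mxE.
by case: eqP => [->|/eqP ij]; [rewrite mulr1n | rewrite dX // mulr0n].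
Qed.

Lemma isdiag_diag v : isdiag (diag_mx v).
Proof. by move=> i j ij; rewrite mxE (negbTE ij) mulr0n. Qed.

Lemma diag_comm X Y : isdiag X -> isdiag Y -> X *m Y = Y *m X.
Proof. by move=> /diagE-> /diagE->; rewrite diag_mxC. Qed.

Lemma sum_two (i j : 'I_n) (x y : K) (w : 'I_n -> K) : i != j ->
  \sum_k (if k == i then x else if k == j then y else 0) * w k = x * w i + y * w j.
Proof.
move=> ij; rewrite (bigD1 i) // (bigD1 j) /=; last by rewrite eq_sym.
rewrite eqxx eq_sym (negbTE ij) eqxx big1 ?addr0 ?addrA // => k /andP[ki kj].
by rewrite (negbTE ki) (negbTE kj) mul0r.
Qed.

Section Main.
Variables (alpha : 'I_n -> nat) (A : 'M[K]_n).
Hypotheses (c0 : [pchar K] =i pred0) (apos : forall i, (0 < alpha i)%N)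
  (uA : A \in unitmx).
Let B := invmx A.
Let AB : A *m B = 1%:M. Proof. exact: mulmxV. Qed.
Let BA : B *m A = 1%:M. Proof. exact: mulVmx. Qed.
Let ch := iffLR (pcharf0P K) c0.
Let f : {mpoly K[n]} := 'X_[ [multinom alpha i | i < n] ] \mPo ltup A.
Let g := lie_alg f.

Lemma gP M : (M \in g)%MS <->
  isdiag (A *m M *m B) /\ \sum_i (A *m M *m B) i i * (alpha i)%:R = 0.
Proof.
rewrite /g /f lie_alg_conj //; split => [/eqP/(lie_mono0 apos c0)//|H].
by apply/eqP; apply/(lie_mono0 apos c0).
Qed.

Lemma cK X : A *m (B *m X *m A) *m B = X.
Proof. by rewrite !mulmxA AB mul1mx -mulmxA AB mulmx1. Qed.

Lemma cK' M : B *m (A *m M *m B) *m A = M.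
Proof. by rewrite !mulmxA BA mul1mx -mulmxA BA mulmx1. Qed.

Lemma cM X Y : (B *m X *m A) *m (B *m Y *m A) = B *m (X *m Y) *m A.
Proof. by rewrite -!mulmxA (mulmxA A) AB mul1mx !mulmxA. Qed.

Lemma gcomm M M' : (M \in g)%MS -> (M' \in g)%MS -> M *m M' = M' *m M.
Proof.
move=> /gP[dM _] /gP[dM' _].
by rewrite -(cK' M) -(cK' M') !cM (diag_comm dM dM').
Qed.

Definition vtwo (i j : 'I_n) : 'rV[K]_n :=
  \row_k (if k == i then (alpha j)%:R else if k == j then - (alpha i)%:R else 0).

Lemma Ng_two i j : i != j -> (B *m diag_mx (vtwo i j) *m A \in g)%MS.
Proof.
move=> ij; apply/gP; rewrite cK; split; first exact: isdiag_diag.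
under eq_bigr do rewrite !mxE eqxx mulr1n.
by rewrite sum_two // mulNr mulrC subrr.
Qed.

Lemma tr_diag_mul (v : 'rV[K]_n) (X : 'M[K]_n) : \tr (diag_mx v *m X) = \sum_i v 0 i * X i i.
Proof. by apply: eq_bigr => i _; rewrite mul_diag_mx mxE. Qed.

Lemma tr_conj X : \tr (B *m X *m A) = \tr X.
Proof. by rewrite mxtrace_mulC mulmxA AB mul1mx. Qed.

Lemma cent_diag W : (W \in 'C(g))%MS -> isdiag (A *m W *m B).
Proof.
move/cent_mxP => cW i j ij.
have Ng := Ng_two ij.
have E' : diag_mx (vtwo i j) *m (A *m W *m B) = (A *m W *m B) *m diag_mx (vtwo i j).
  transitivity (A *m (B *m diag_mx (vtwo i j) *m A *m W) *m B).
    by rewrite !mulmxA AB mul1mx.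
  rewrite (cW _ Ng).
  by rewrite !mulmxA -(mulmxA _ A B) AB mulmx1.
move: E'; move: (A *m W *m B) => X.
move/matrixP => /(_ i j); rewrite mul_diag_mx mul_mx_diag !mxE eqxx.
rewrite eq_sym (negbTE ij) eqxx; set x := X i j => h.
have h2 : ((alpha i)%:R + (alpha j)%:R) * x = 0 :> K.
  by rewrite mulrDl h mulrN mulrC subrr.
move/eqP: h2; rewrite mulf_eq0 -natrD ch addn_eq0 (gtn_eqF (apos i)) /=.
by move/eqP.
Qed.

Lemma conj_diag_cent X : isdiag X -> (B *m X *m A \in 'C(g))%MS.
Proof.
move=> dX; apply/cent_mxP => M /gP[dM _].
by rewrite -(cK' M) !cM (diag_comm dM dX).
Qed.

Let Dsp : 'M[K]_(n, n * n) := \matrix_k mxvec (B *m delta_mx k k *m A).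

Lemma DspE v : v *m Dsp = mxvec (B *m diag_mx v *m A).
Proof.
rewrite mulmx_sum_row diag_mx_sum_delta mulmx_sumr mulmx_suml linear_sum.
apply: eq_bigr => k _; rewrite rowK -scalemxAr -scalemxAl.
by rewrite linearZ.
Qed.

Lemma Dsp_free : row_free Dsp.
Proof.
rewrite -kermx_eq0; apply/rowV0P => v /sub_kermxP; rewrite DspE => /eqP.
rewrite mxvec_eq0 => /eqP H0.
have : diag_mx v = 0 by rewrite -(cK (diag_mx v)) H0 mulmx0 mul0mx.
move/matrixP => Dv; apply/rowP => k; have := Dv k k.
by rewrite !mxE eqxx mulr1n.
Qed.

Lemma C_eq : ('C(g) == Dsp)%MS.
Proof.
apply/andP; split.
  apply/row_subP => k; set W := vec_mx (row k ('C(g))%MS).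
  have WC : (W \in 'C(g))%MS by rewrite /W vec_mxK row_sub.
  have dX := cent_diag WC.
  rewrite -(vec_mxK (row k _)) -/W -(cK' W) (diagE dX) -DspE.
  exact: submxMl.
apply/row_subP => k; rewrite rowK; apply: conj_diag_cent => i j ij.
rewrite mxE; case: (i =P k) => [<-|] /=; last by [].
by rewrite eq_sym (negbTE ij).
Qed.

Lemma rankC : \rank ('C(g))%MS = n.
Proof. by rewrite (eqmx_rank C_eq); apply/eqP; exact: Dsp_free. Qed.

Let Dm : 'M[K]_n := diag_mx (\row_i (alpha i)%:R).
Let H := B *m Dm *m A.

Lemma HC : (H \in 'C(g))%MS.
Proof. exact/conj_diag_cent/isdiag_diag. Qed.

Lemma trH : \tr H = (\sum_(i < n) alpha i)%N%:R.
Proof.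
rewrite /H tr_conj mxtrace_diag natr_sum.
by apply: eq_bigr => i _; rewrite mxE.
Qed.

Lemma trHM M : (M \in g)%MS -> \tr (H *m M) = 0.
Proof.
case/gP => _ s0; rewrite /H -(cK' M) cM tr_conj tr_diag_mul -[RHS]s0.
by apply: eq_bigr => i _; rewrite mxE mulrC.
Qed.

Lemma idx_cases : (exists k : 'I_n, true) \/ (forall k : 'I_n, False).
Proof.
case: (pickP (fun _ : 'I_n => true)) => [k _|none]; [left; by exists k|].
by right => k; have := none k.
Qed.

Lemma noidx_mx (none : forall k : 'I_n, False) (X : 'M[K]_n) : X = 0.
Proof. by apply/matrixP => i; case: (none i). Qed.

Lemma sq_sum_nz (k : 'I_n) : \sum_i ((alpha i)%:R * (alpha i)%:R : K) != 0.
Proof.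
rewrite (eq_bigr (fun i => (alpha i * alpha i)%N%:R)) => [|i _]; last by rewrite natrM.
by rewrite -natr_sum ch (bigD1 k) //= addn_eq0 muln_eq0 (gtn_eqF (apos k)).
Qed.

Lemma Huniq H' : (H' \in 'C(g))%MS -> \tr H' = (\sum_(i < n) alpha i)%N%:R ->
  (forall M, (M \in g)%MS -> \tr (H' *m M) = 0) -> H' = H.
Proof.
move=> H'C trH' orth.
have dX := cent_diag H'C; have H'E := esym (cK' H').
move: (A *m H' *m B) dX H'E => X dX H'E.
have key k l : X l l * (alpha k)%:R = X k k * (alpha l)%:R.
  case: (k =P l) => [->//|/eqP kl].
  have := orth _ (Ng_two kl); rewrite H'E cM tr_conj mxtrace_mulC tr_diag_mul.
  under eq_bigr do rewrite mxE.
  rewrite sum_two // mulNr => /eqP; rewrite subr_eq0 => /eqP h.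
  by rewrite mulrC -h mulrC.
have trX : \sum_i X i i = (\sum_(i < n) alpha i)%N%:R by rewrite -trH' H'E tr_conj.
have Xkk k : X k k = (alpha k)%:R.
  have : (\sum_l X l l) * (alpha k)%:R = X k k * \sum_l (alpha l)%:R.
    by rewrite mulr_suml mulr_sumr; apply: eq_bigr => l _; rewrite key.
  have nz : ((\sum_(i < n) alpha i)%N%:R : K) != 0.
    by rewrite ch (bigD1 k) //= addn_eq0 (gtn_eqF (apos k)).
  by rewrite trX -natr_sum mulrC => /(mulIf nz) ->.
rewrite H'E /H; congr (_ *m _ *m _); apply/matrixP => i j; rewrite !mxE.
case: (i =P j) => [->|/eqP ij]; first by rewrite Xkk mulr1n.
by rewrite dX // mulr0n.
Qed.

Lemma Hdiag : A *m H *m invmx A = diag_mx (\row_i (alpha i)%:R).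
Proof. exact: cK. Qed.

Lemma scale_conj (c : K) (X : 'M[K]_n) : A *m (c *: X) *m B = c *: (A *m X *m B).
Proof. by rewrite -scalemxAr -scalemxAl. Qed.

Lemma Hdirect : mxdirect (g + mxvec H).
Proof.
apply/mxdirect_addsP; apply/eqP/rowV0P => v; rewrite sub_capmx.
case/andP => vg /sub_rVP[c vE]; rewrite vE.
move: vg; rewrite vE -linearZ /= => /gP[_]; rewrite scale_conj cK.
under eq_bigr do rewrite !mxE eqxx mulr1n -mulrA.
rewrite -mulr_sumr => /eqP; rewrite mulf_eq0.
case: idx_cases => [[k _]|none].
  by rewrite (negbTE (sq_sum_nz k)) orbF => /eqP->; rewrite scale0r linear0.
by move=> _; rewrite (noidx_mx none H) scaler0 linear0.
Qed.

Lemma Ceq : ('C(g) == g + mxvec H)%MS.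
Proof.
apply/andP; split; last first.
  rewrite addsmx_sub HC andbT; apply/row_subP => k.
  set W := vec_mx (row k g).
  have Wg : (W \in g)%MS by rewrite /W vec_mxK row_sub.
  rewrite -(vec_mxK (row k g)) -/W; apply/cent_mxP => M Mg.
  exact: gcomm Mg Wg.
apply/row_subP => k; set W := vec_mx (row k ('C(g))%MS).
have WC : (W \in 'C(g))%MS by rewrite /W vec_mxK row_sub.
rewrite -(vec_mxK (row k _)) -/W.
case: idx_cases => [[k0 _]|none]; last first.
  by rewrite (noidx_mx none W) linear0 sub0mx.
have dX := cent_diag WC; have hW := esym (cK' W).
move: (A *m W *m B) dX hW => X dX hW.
set s := \sum_i ((alpha i)%:R * (alpha i)%:R : K).
set c := (\sum_i X i i * (alpha i)%:R) / s.
have Gg : (B *m (X - c *: Dm) *m A \in g)%MS.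
  apply/gP; rewrite cK; split.
    by move=> i j ij; rewrite !mxE dX // (negbTE ij) mulr0n mulr0 subrr.
  under eq_bigr do rewrite !mxE eqxx mulr1n mulrBl -mulrA.
  by rewrite sumrB -mulr_sumr /c -/s divfK ?subrr // sq_sum_nz.
have -> : W = B *m (X - c *: Dm) *m A + c *: H.
  by rewrite hW /H mulmxBr mulmxBl -scalemxAr -scalemxAl subrK.
move: Gg; set G := B *m (X - c *: Dm) *m A => Gg.
have -> : mxvec (G + c *: H) = mxvec G + c *: mxvec H.
  by rewrite raddfD /= linearZ.
by apply: addmx_sub_adds => //; exact: scalemx_sub (submx_refl _).
Qed.

End Main.

End Aux.

Unset Implicit Arguments.
Set Strict Implicit.

Theorem proposition6 (K : fieldType) (n : nat) (alpha : 'I_n -> nat)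
    (A : 'M[K]_n) :
  [pchar K] =i pred0 ->
  (forall i, 0 < alpha i)%N ->
  A \in unitmx ->
  let m : {mpoly K[n]} := 'X_[ [multinom alpha i | i < n] ] in
  let d : nat := (\sum_(i < n) alpha i)%N in
  let f : {mpoly K[n]} :=
    m \mPo [tuple \sum_(j < n) A i j *: 'X_j | i < n] in
  let g := lie_alg f in
  let C := 'C(g)%MS in
  \rank C = n /\
  exists H : 'M[K]_n,
    [/\ (H \in C)%MS, \tr H = d%:R & forall M, (M \in g)%MS -> \tr (H *m M) = 0]
    /\ (forall H' : 'M[K]_n,
          [/\ (H' \in C)%MS, \tr H' = d%:R
            & forall M, (M \in g)%MS -> \tr (H' *m M) = 0] -> H' = H)
    /\ (exists P : 'M[K]_n, P \in unitmx /\
          P *m H *m invmx P = diag_mx (\row_i (alpha i)%:R))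
    /\ (C == g + mxvec H)%MS /\ mxdirect (g + mxvec H).
Proof.
move=> c0 apos uA m d f g C.
split; first by apply: rankC.
exists (invmx A *m diag_mx (\row_i (alpha i)%:R) *m A).
split; first by split; [apply: HC | apply: trH | apply: trHM].
split; first by move=> H' [H'C trH' orth]; apply: Huniq.
split; first by exists A; split => //; apply: Hdiag.
by split; [apply: Ceq | apply: Hdirect].
Qed.
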